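(* Let $n\equiv 1\pmod 4$. Let $I_1,I_2\subseteq\{0,1,\dots,(n-1)/2\}$ be such that $\{2i,2i+1\}\cap\{j,n-j\}=\emptyset$ for all $i\in I_1$ and $j\in I_2$, and let $$D=\bigcup_{i\in I_1}\{2i,2i+1\}\cup\bigcup_{j\in I_2}\{j,n-j\}.$$ Then the hypercube $Q_n$ admits a $D$-magic labeling.
   Context: The hypercube $Q_n$ has vertex set $\mathbb{F}_2^n$, two vertices adjacent iff they differ in exactly one coordinate; $d(x,y)$ is the graph distance (the Hamming distance). For a set of distances $D$ and a vertex $x$ of a graph $G$, $N_D(x)=\{y\in V(G): d(x,y)\in D\}$. For a graph $G$ of order $N$, a $D$-magic labeling is a bijection $f:V(G)\to\{1,\dots,N\}$ for which there exists a constant $k$ with $\sum_{y\in N_D(x)}f(y)=k$ for every vertex $x$. *)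

(* Defs.v *)
From mathcomp Require Import all_boot.
Set Implicit Arguments. Unset Strict Implicit. Unset Printing Implicit Defensive.

Definition cube (n : nat) := {ffun 'I_n -> bool}.

(* Hamming distance = graph distance in Q_n. *)
Definition hdist (n : nat) (x y : cube n) : nat := #|[set i | x i != y i]|.

Definition distNbhd (n : nat) (D : pred nat) (x : cube n) : {set cube n} :=
  [set y | D (hdist x y)].

Definition D_magic (n : nat) (D : pred nat) (f : cube n -> nat) : Prop :=
  injective f /\ (forall x, 1 <= f x <= #|{: cube n}|) /\
  exists k : nat, forall x, \sum_(y in distNbhd D x) f y = k.

Definition theD (n : nat) (I1 I2 : pred nat) : pred nat :=
  fun d => [|| [exists i : 'I_n.+1, I1 i && ((d == 2 * i) || (d == 2 * i + 1))]
             | [exists j : 'I_n.+1, I2 j && ((d == j) || (d == n - j))]].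

(* Main.v *)
Require Import Defs.
From mathcomp Require Import all_boot zify.
Set Implicit Arguments. Unset Strict Implicit. Unset Printing Implicit Defensive.


Definition xorv {n} (x y : cube n) : cube n := [ffun i => x i (+) y i].
Definition onev {n} : cube n := [ffun => true].
Definition ev {n} (q : 'I_n) : cube n := [ffun i => i == q].
Definition wt {n} (z : cube n) : nat := \sum_i nat_of_bool (z i).
Definition dot {n} (s z : cube n) : bool := \big[addb/false]_i (s i && z i).

Lemma xorvK n (x y : cube n) : xorv x (xorv x y) = y.
Proof. by apply/ffunP=> i; rewrite !ffunE; case: (x i); case: (y i). Qed.

Lemma xorvKr n (x y : cube n) : xorv (xorv x y) y = x.
Proof. by apply/ffunP=> i; rewrite !ffunE; case: (x i); case: (y i). Qed.

Lemma dotDr n (s x y : cube n) : dot s (xorv x y) = dot s x (+) dot s y.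
Proof.
rewrite /dot -big_split /=; apply: eq_bigr => i _; rewrite ffunE.
by case: (s i); case: (x i); case: (y i).
Qed.

Lemma dotDl n (s t y : cube n) : dot (xorv s t) y = dot s y (+) dot t y.
Proof.
rewrite /dot -big_split /=; apply: eq_bigr => i _; rewrite ffunE.
by case: (s i); case: (t i); case: (y i).
Qed.

Lemma dot_ev n (s : cube n) q : dot s (ev q) = s q.
Proof.
rewrite /dot (bigD1 q) //= ffunE eqxx andbT big1 ?addbF // => i Hi.
by rewrite ffunE (negbTE Hi) andbF.
Qed.

Lemma dot_one n (s : cube n) : dot s onev = odd (wt s).
Proof.
rewrite /wt (big_morph odd oddD (erefl : odd 0 = false)) /dot.
by apply: eq_bigr => i _; rewrite ffunE andbT oddb.
Qed.

Lemma wt_one n (z : cube n) : wt z + wt (xorv z onev) = n.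
Proof.
rewrite /wt -big_split /= -[RHS]card_ord -sum1_card; apply: eq_bigr => i _.
by rewrite !ffunE; case: (z i).
Qed.

Lemma wt_swap n (z : cube n) q r : z q != z r ->
  wt (xorv z (xorv (ev q) (ev r))) = wt z.
Proof.
move=> Hqr.
have qr : q != r by apply: contraNneq Hqr => ->.
rewrite /wt (bigD1 q) // (bigD1 r) /=; last by rewrite eq_sym.
rewrite [in RHS](bigD1 q) // [in RHS](bigD1 r) /=; last by rewrite eq_sym.
rewrite !ffunE eqxx (negbTE qr) eq_sym (negbTE qr) eqxx /=.
rewrite addnA [in RHS]addnA; congr (_ + _).
  by move: Hqr; case: (z q); case: (z r).
apply: eq_bigr => i /andP[iq ir]; rewrite !ffunE (negbTE iq) (negbTE ir).
by case: (z i).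
Qed.

Lemma wt_flip n (z : cube n) p :
  wt (xorv z (ev p)) + z p = wt z + ~~ z p.
Proof.
rewrite /wt (bigD1 p) // [in RHS](bigD1 p) //= !ffunE eqxx.
have -> : \sum_(i < n | i != p) (xorv z (ev p)) i = \sum_(i < n | i != p) z i.
  by apply: eq_bigr => i ip; rewrite !ffunE (negbTE ip) addbF.
case: (z p) => /=; by rewrite ?addbT ?addbF add0n addn0 addnC.
Qed.

Lemma hdist_wt n (x y : cube n) : hdist x y = wt (xorv x y).
Proof.
rewrite /hdist /wt -sum1_card big_mkcond /=; apply: eq_bigr => i _.
by rewrite inE !ffunE; case: (x i); case: (y i).
Qed.

Definition cI2 n (I2 : pred nat) (w : nat) : bool :=
  [exists j : 'I_n.+1, I2 j && ((w == j) || (w == n - j))].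

Lemma sum_pair n (s : cube n) (p : 'I_n) (t : 'I_n -> 'I_n)
  (Ht : forall q, t (t q) = q) (Htp : t p = p) (Hsp : s p)
  (Hs : forall q, q != p -> s (t q) = ~~ s q) (F : 'I_n -> nat) :
  (forall i, F (t i) = F i) ->
  \sum_i F i = F p + 2 * \sum_(i | s i && (i != p)) F i.
Proof.
move=> HF.
rewrite (bigID (fun i => s i)) /= (bigD1 p) //=.
have -> : \sum_(i < n | ~~ s i) F i = \sum_(i | s i && (i != p)) F i.
  rewrite (reindex_inj (can_inj Ht)) /=; apply: eq_big => [i|i _]; last exact: HF.
  case: (eqVneq i p) => [->|ip]; first by rewrite Htp Hsp.
  by rewrite Hs // negbK andbT.
by rewrite mul2n -addnn addnA.
Qed.

Lemma odd_wt_s n (s : cube n) (p : 'I_n) (t : 'I_n -> 'I_n)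
  (Ht : forall q, t (t q) = q) (Htp : t p = p) (Hsp : s p)
  (Hs : forall q, q != p -> s (t q) = ~~ s q) :
  n %% 4 = 1 -> odd (wt s).
Proof.
move=> Hn.
have H1 := sum_pair Ht Htp Hsp Hs (F := fun _ => 1) (fun _ => erefl).
rewrite sum1_card card_ord /= in H1.
have H2 : wt s = 1 + \sum_(i | s i && (i != p)) 1.
  have -> : wt s = \sum_(i | s i) 1.
    by rewrite /wt [RHS]big_mkcond /=; apply: eq_bigr => i _; case: (s i).
  by rewrite (bigD1 p).
move: H1 Hn H2; set X := \sum_(i | _) 1 => H1 Hn H2.
have : wt s %% 2 = 1 by lia.
by rewrite modn2; case: (odd (wt s)).
Qed.

Lemma parity_wt n (s : cube n) (p : 'I_n) (t : 'I_n -> 'I_n)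
  (Ht : forall q, t (t q) = q) (Htp : t p = p) (Hsp : s p)
  (Hs : forall q, q != p -> s (t q) = ~~ s q) (z : cube n) :
  (forall q, z (t q) = z q) -> odd (wt z) = z p.
Proof.
move=> Hz.
rewrite /wt (sum_pair Ht Htp Hsp Hs (F := fun i => nat_of_bool (z i))) //.
  by rewrite oddD oddM /= addbF oddb.
by move=> i /=; rewrite Hz.
Qed.

Definition vz n (t : 'I_n -> 'I_n) (p : 'I_n) (z : cube n) : cube n :=
  if [pick q | z q != z (t q)] is Some q then xorv (ev q) (ev (t q)) else ev p.

Definition phi n (I2 : pred nat) (t : 'I_n -> 'I_n) (p : 'I_n) (z : cube n) : cube n :=
  if cI2 n I2 (wt z) then xorv z onev else xorv z (vz t p z).

Lemma tau_eq n (t : 'I_n -> 'I_n) (Ht : forall q, t (t q) = q) i q :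
  (t i == q) = (i == t q).
Proof. by rewrite -{1}(Ht q) (can_eq Ht). Qed.

Lemma vz_tau n (t : 'I_n -> 'I_n) p (Ht : forall q, t (t q) = q) (Htp : t p = p) z i :
  vz t p z (t i) = vz t p z i.
Proof.
rewrite /vz; case: pickP => [q _|_]; rewrite !ffunE.
  by rewrite !(tau_eq Ht) Ht addbC.
by rewrite tau_eq // Htp.
Qed.

Lemma vz_phi n (t : 'I_n -> 'I_n) p (Ht : forall q, t (t q) = q) (Htp : t p = p) z :
  vz t p (xorv z (vz t p z)) = vz t p z.
Proof.
have E : [pick q | xorv z (vz t p z) q != xorv z (vz t p z) (t q)] =
         [pick q | z q != z (t q)].
  apply: eq_pick => q /=; rewrite !ffunE vz_tau //.
  by case: (z q); case: (z (t q)); case: (vz t p z q).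
by rewrite {1}/vz E.
Qed.

Lemma phi_prop n (I1 I2 : pred nat) (s : cube n) (p : 'I_n) (t : 'I_n -> 'I_n)
  (Ht : forall q, t (t q) = q) (Htp : t p = p) (Hsp : s p)
  (Hs : forall q, q != p -> s (t q) = ~~ s q)
  (Hn : n %% 4 = 1)
  (HI : forall i j, I1 i -> I2 j ->
     [/\ 2 * i != j, 2 * i != n - j, 2 * i + 1 != j & 2 * i + 1 != n - j])
  (z : cube n) :
  theD n I1 I2 (wt z) ->
  [/\ theD n I1 I2 (wt (phi I2 t p z)), phi I2 t p (phi I2 t p z) = z
    & dot s (phi I2 t p z) = ~~ dot s z].
Proof.
move=> HD; rewrite /phi; case: ifP => Hc.
  have Hw : wt (xorv z onev) = n - wt z by have := wt_one z; lia.
  have Hc' : cI2 n I2 (n - wt z).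
    move: Hc => /existsP [j /andP [Ij Hj]]; apply/existsP; exists j.
    rewrite Ij /=; have := ltn_ord j; lia.
  rewrite Hw; have Hc2 := Hc'; move: Hc'; case: (cI2 n I2 (n - wt z)) => // _.
  rewrite xorvKr dotDr dot_one (odd_wt_s Ht Htp Hsp Hs Hn) addbT.
  by split => //; apply/orP; right.
move: HD => /orP [/existsP [i /andP [Ii Hw]] | HD]; last first.
  by exfalso; move/negP: (negbT Hc); apply; exact HD.
set v := vz t p z.
have [Hwv Hdv] : ((wt (xorv z v) == 2 * i) || (wt (xorv z v) == 2 * i + 1))
                 /\ dot s v = true.
  rewrite /v /vz; case: pickP => [q Hq | Hnone].
    rewrite wt_swap // Hw; split => //.
    have qp : q != p by apply: contraNneq Hq => ->; rewrite Htp.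
    by rewrite dotDr !dot_ev Hs //; case: (s q).
  have Hz : forall q, z (t q) = z q.
    by move=> q; have := Hnone q; case: (z q); case: (z (t q)).
  have Hpar := parity_wt Ht Htp Hsp Hs Hz.
  have Hfl := wt_flip z p.
  rewrite dot_ev Hsp; split => //.
  have : wt z %% 2 = z p by rewrite modn2 Hpar.
  move: Hfl; case: (z p) => /= Hfl Hm; lia.
have Hc' : cI2 n I2 (wt (xorv z v)) = false.
  apply/negbTE/negP; rewrite /cI2 => /existsP [j /andP [Ij Hj]].
  have [h1 h2 h3 h4] := HI _ _ Ii Ij; lia.
move: Hc'; case: (cI2 n I2 (wt (xorv z v))) => // _.
rewrite vz_phi // xorvKr dotDr Hdv addbT; split => //.
by apply/orP; left; apply/existsP; exists i; rewrite Ii.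
Qed.

Lemma count_eq n (I1 I2 : pred nat) (s : cube n) (p : 'I_n) (t : 'I_n -> 'I_n)
  (Ht : forall q, t (t q) = q) (Htp : t p = p) (Hsp : s p)
  (Hs : forall q, q != p -> s (t q) = ~~ s q)
  (Hn : n %% 4 = 1)
  (HI : forall i j, I1 i -> I2 j ->
     [/\ 2 * i != j, 2 * i != n - j, 2 * i + 1 != j & 2 * i + 1 != n - j]) :
  \sum_(y | theD n I1 I2 (wt y)) nat_of_bool (~~ dot s y) =
  \sum_(y | theD n I1 I2 (wt y)) nat_of_bool (dot s y).
Proof.
have P := phi_prop Ht Htp Hsp Hs Hn HI.
rewrite (reindex_onto (phi I2 t p) (phi I2 t p)); last first.
  by move=> y Hy; have [] := P y Hy.
apply: eq_big => [y|y /andP [Hy /eqP Hyy]].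
  case Hy: (theD n I1 I2 (wt y)).
    by have [-> -> _] := P y Hy; rewrite eqxx.
  apply/negbTE/andP => -[H1 /eqP H2].
  by have [+ _ _] := P _ H1; rewrite H2 Hy.
have [_ _ ] := P _ Hy; rewrite Hyy => ->.
by [].
Qed.

Lemma sum_shift n (b : 'I_n.+1 -> bool) :
  \sum_(i < n) 2 ^ (lift ord0 i) * b (lift ord0 i) =
  2 * \sum_(i < n) 2 ^ i * b (lift ord0 i).
Proof.
by rewrite big_distrr /=; apply: eq_bigr => i _; rewrite expnS mulnA.
Qed.

Lemma bin_lt n (b : 'I_n -> bool) : \sum_(k < n) 2 ^ k * b k < 2 ^ n.
Proof.
elim: n b => [|n IH] b; first by rewrite big_ord0.
rewrite big_ord_recl /= expn0 mul1n sum_shift expnS.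
move: (IH (fun i => b (lift ord0 i))) => /=.
move: (\sum_(i < n) _) => X; move: (2 ^ n) => Y.
by case: (b ord0) => /=; lia.
Qed.

Lemma bin_inj n (b c : 'I_n -> bool) :
  \sum_(k < n) 2 ^ k * b k = \sum_(k < n) 2 ^ k * c k -> forall k, b k = c k.
Proof.
elim: n b c => [|n IH] b c; first by move=> _ [].
rewrite !big_ord_recl /= !expn0 !mul1n !sum_shift.
move: (IH (fun i => b (lift ord0 i)) (fun i => c (lift ord0 i))) => /=.
move: (\sum_(i < n) 2 ^ i * b _) => X; move: (\sum_(i < n) 2 ^ i * c _) => Y.
move=> IH' E.
have E0 : b ord0 = c ord0.
  by move: E; case: (b ord0); case: (c ord0) => //=; lia.
have EXY : X = Y by move: E; rewrite E0; case: (c ord0) => /=; lia.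
move=> k; case: (unliftP ord0 k) => [j ->|->] //.
exact: IH' EXY j.
Qed.

Lemma card_cube n : #|{: cube n}| = 2 ^ n.
Proof. by rewrite card_ffun card_bool card_ord. Qed.

Lemma dot_evl n (z : cube n) q : dot (ev q) z = z q.
Proof.
rewrite /dot (bigD1 q) //= ffunE eqxx /= big1 ?addbF // => i Hi.
by rewrite ffunE (negbTE Hi).
Qed.

Definition sn (m k l : nat) : bool :=
  if k == 0 then l <= 2 * m
  else if k <= 2 * m then ((l <= 2 * m) && (l != k)) || (l == k + 2 * m)
  else ((0 < l) && (l <= 2 * m)) || (l == k).

Definition tn (m k l : nat) : nat :=
  if k <= 2 * m then
    (if l == 0 then 0 else if l <= 2 * m then l + 2 * m else l - 2 * m)
  else
    (if l == k - 2 * m then l else if l == 0 then k else if l == k then 0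
     else if l <= 2 * m then l + 2 * m else l - 2 * m).

Definition pn (m k : nat) : nat := if k <= 2 * m then 0 else k - 2 * m.

Lemma tn_lt m k l : k < (4 * m).+1 -> l < (4 * m).+1 -> tn m k l < (4 * m).+1.
Proof. by move=> Hk Hl; rewrite /tn; (do ![case: ifP => ?]); lia. Qed.

Lemma pn_lt m k : k < (4 * m).+1 -> pn m k < (4 * m).+1.
Proof. by move=> Hk; rewrite /pn; (do ![case: ifP => ?]); lia. Qed.

Lemma tn_inv m k l : k < (4 * m).+1 -> l < (4 * m).+1 -> tn m k (tn m k l) = l.
Proof.
move=> Hk Hl; move Eu: (tn m k l) => u; move: Eu; rewrite /tn.
by (do ![case: ifP => ?]); lia.
Qed.

Lemma tn_p m k : k < (4 * m).+1 -> tn m k (pn m k) = pn m k.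
Proof.
move=> Hk; move Ep: (pn m k) => p; move: Ep; rewrite /tn /pn.
by (do ![case: ifP => ?]); lia.
Qed.

Lemma sn_p m k : k < (4 * m).+1 -> sn m k (pn m k).
Proof. by move=> Hk; rewrite /sn /pn; (do ![case: ifP => ?]); lia. Qed.

Lemma sn_t m k l : k < (4 * m).+1 -> l < (4 * m).+1 -> l != pn m k ->
  sn m k (tn m k l) = ~~ sn m k l.
Proof.
move=> Hk Hl; move Eu: (tn m k l) => u; move: Eu; rewrite /sn /tn /pn.
by (do ![case: ifP => ?]); lia.
Qed.

Definition sv m (k : 'I_(4*m).+1) : cube (4*m).+1 := [ffun l : 'I_(4*m).+1 => sn m k l].
Definition tv m (k : 'I_(4*m).+1) (l : 'I_(4*m).+1) : 'I_(4*m).+1 := inord (tn m k l).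
Definition pv m (k : 'I_(4*m).+1) : 'I_(4*m).+1 := inord (pn m k).

Lemma tv_inv m (k l : 'I_(4*m).+1) : tv k (tv k l) = l.
Proof.
apply: val_inj; rewrite /tv /= inordK; last exact: tn_lt.
by rewrite inordK ?tn_inv //; exact: tn_lt.
Qed.

Lemma tv_p m (k : 'I_(4*m).+1) : tv k (pv k) = pv k.
Proof.
by apply: val_inj; rewrite /tv /pv /= !inordK ?tn_p ?pn_lt //.
Qed.

Lemma sv_p m (k : 'I_(4*m).+1) : sv k (pv k).
Proof. by rewrite /sv /pv ffunE inordK ?sn_p ?pn_lt. Qed.

Lemma sv_t m (k q : 'I_(4*m).+1) : q != pv k -> sv k (tv k q) = ~~ sv k q.
Proof.
move=> Hq; rewrite /sv /tv !ffunE inordK ?tn_lt // sn_t //.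
move: Hq; apply: contra_neq => E; apply: val_inj; rewrite /pv /= inordK ?E //.
exact: pn_lt.
Qed.

Lemma ieq m (l : 'I_(4*m).+1) a : a < (4*m).+1 -> (l == inord a) = (nat_of_ord l == a).
Proof. by move=> Ha; rewrite -(inj_eq val_inj) /= inordK. Qed.

Lemma sv_rel1 m k : 0 < k <= 2 * m ->
  @sv m (inord k) = xorv (@sv m (inord 0)) (xorv (ev (inord k)) (ev (inord (k + 2 * m)))).
Proof.
move=> Hk; apply/ffunP => l; rewrite !ffunE !ieq; try lia.
have Hl := ltn_ord l.
rewrite /sn !inordK; try lia.
move: (nat_of_ord l) Hl => x Hx.
by (do ![case: ifP => ?]); (do ![case: eqP => ?]); rewrite /=; lia.
Qed.

Lemma sv_rel2 m k : 2 * m < k < (4 * m).+1 ->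
  @sv m (inord k) = xorv (@sv m (inord 0)) (xorv (ev (inord 0)) (ev (inord k))).
Proof.
move=> Hk; apply/ffunP => l; rewrite !ffunE !ieq; try lia.
have Hl := ltn_ord l.
rewrite /sn !inordK; try lia.
move: (nat_of_ord l) Hl => x Hx.
by (do ![case: ifP => ?]); (do ![case: eqP => ?]); rewrite /=; lia.
Qed.

Lemma kernel m (z : cube (4*m).+1) :
  (forall k, dot (sv k) z = false) -> forall l, z l = false.
Proof.
move=> H.
have Hn : (4*m).+1 %% 4 = 1 by lia.
have A := H (inord 0).
have H1 : forall k, 0 < k <= 2 * m -> z (inord k) = z (inord (k + 2 * m)).
  move=> k Hk; have := H (inord k); rewrite sv_rel1 // !dotDl !dot_evl A /=.
  by case: (z _); case: (z _).
have H2 : forall k, 2 * m < k < (4 * m).+1 -> z (inord 0) = z (inord k).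
  move=> k Hk; have := H (inord k); rewrite sv_rel2 // !dotDl !dot_evl A /=.
  by case: (z _); case: (z _).
have H3 : forall l, z l = z (inord 0).
  move=> l; rewrite -(inord_val l); have Hl := ltn_ord l.
  move: (nat_of_ord l) Hl => x Hx.
  case: (ltnP (2 * m) x) => Hm; first by rewrite (H2 x) //; lia.
  case: (posnP x) => [->|Hx0] //.
  rewrite H1; last lia.
  by rewrite (H2 (x + 2 * m)) //; lia.
case E: (z (inord 0)); last by move=> l; rewrite H3 E.
have Zo : z = onev by apply/ffunP => l; rewrite !ffunE H3 E.
move: A; rewrite Zo dot_one (odd_wt_s (@tv_inv m _) (@tv_p m _) (@sv_p m _) (@sv_t m _) Hn).
by [].
Qed.

Theorem theorem3p9 (n : nat) (I1 I2 : pred nat) :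
  n %% 4 = 1 ->
  (forall i, I1 i -> i <= (n - 1) %/ 2) ->
  (forall j, I2 j -> j <= (n - 1) %/ 2) ->
  (forall i j, I1 i -> I2 j ->
     [/\ 2 * i != j, 2 * i != n - j, 2 * i + 1 != j & 2 * i + 1 != n - j]) ->
  exists f : cube n -> nat, D_magic (theD n I1 I2) f.
Proof.
move=> Hn _ _ HI.
have [a En] : exists a, n = (4 * a).+1.
  by exists (n %/ 4); rewrite {1}(divn_eq n 4) Hn; lia.
subst n.
pose f (y : cube (4*a).+1) := 1 + \sum_(k < (4*a).+1) 2 ^ k * dot (sv k) y.
exists f; split; [|split].
- move=> y y' /eqP; rewrite /f eqn_add2l => /eqP /bin_inj E.
  have K := @kernel a (xorv y y') (fun k => etrans (dotDr _ _ _) (etrans (f_equal (addb _) (esym (E k))) (addbb _))).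
  apply/ffunP => l; have := K l; rewrite ffunE; by case: (y l); case: (y' l).
- move=> x; rewrite card_cube /f; have := bin_lt (fun k => dot (sv k) x).
  move: (\sum_(k < _) _) => X; lia.
- exists (\sum_(y | theD (4*a).+1 I1 I2 (wt y)) f y) => x.
  have -> : \sum_(y in distNbhd (theD (4 * a).+1 I1 I2) x) f y =
            \sum_(y | theD (4*a).+1 I1 I2 (wt y)) f (xorv x y).
    rewrite (reindex_inj (can_inj (xorvK x))) /=.
    by apply: eq_bigl => y; rewrite inE hdist_wt xorvK.
  rewrite /f !big_split /=; congr (_ + _).
  rewrite [LHS]exchange_big [RHS]exchange_big /=.
  apply: eq_bigr => k _; rewrite -!big_distrr /=; congr (_ * _).
  under eq_bigr do rewrite dotDr.
  case: (dot (sv k) x) => //=.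
  exact: (count_eq (@tv_inv a k) (@tv_p a k) (@sv_p a k) (@sv_t a k) _ HI).
Qed.
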